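(* Let $(a_i)_{i\ge0}$ be a quasi-species, let $p_n(\mathbf y)$ be its associated linear sequence of symmetric functions of binomial type, and let $p_n(x)=\Pi\,p_n(\mathbf y)\in\mathbb C[x]$. Let $\mathrm{Gen}(t)=\sum_{i\ge0}a_it^i/i!$. Then, as formal power series in $t$ with coefficients in $\mathbb C[x]$, $$\sum_{n\ge0}p_n(x)\frac{t^n}{n!}=\mathrm{Gen}(t)^x=\exp\big(x\log\mathrm{Gen}(t)\big).$$
   Context: A quasi-species is a sequence $(a_i)_{i\ge0}$ of complex numbers with $a_0=1$ and $a_1\ne0$. The associated linear sequence of binomial type is $$p_n(\mathbf y)=\sum_{\lambda\vdash n}\frac{n!}{\prod_i\lambda_i!}\Big(\prod_i a_{\lambda_i}\Big)m_\lambda(\mathbf y),$$ where $m_\lambda$ is the monomial symmetric function. $\Pi$ is the algebra homomorphism from symmetric functions to $\mathbb C[x]$ given by $$\Pi\, m_\lambda(\mathbf y)=\frac{(x)_{\ell(\lambda)}}{\prod_{j\ge1}\mathrm{mult}_j(\lambda)!}.$$ Here $\ell(\lambda)$ is the number of nonzero parts, $\mathrm{mult}_j(\lambda)$ is the number of parts equal to $j$, and $(x)_k=x(x-1)\cdots(x-k+1)$. For a nonnegative integer $x$, $\Pi$ amounts to setting $y_1=\dots=y_x=1$ and all other variables equal to $0$. Since $a_0=1$, $\log\mathrm{Gen}(t)$ is a well-defined formal power series. *)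

(* Defs.v *)
From HB Require Import structures.
From mathcomp Require Import all_boot all_order all_algebra.
From mathcomp Require Import complex.
From mathcomp Require Import Rstruct.
Set Implicit Arguments. Unset Strict Implicit. Unset Printing Implicit Defensive.
Import Order.TTheory GRing.Theory Num.Theory.
Local Open Scope ring_scope.

Definition CC : fieldType := (complex.complex Rdefinitions.R).

Definition is_partition (n : nat) (l : seq nat) : bool :=
  [&& sorted geq l, all (fun i => 0 < i)%N l & sumn l == n].

(* a finite list of candidate sequences (length <= n, entries in [0,n]),
   filtered down to the partitions of n; it lists every partition of n
   exactly once *)
Definition candidates (n : nat) : seq (seq nat) :=
  flatten [seq [seq map (@nat_of_ord n.+1) (tval t) | t : k.-tuple 'I_n.+1]
          | k <- iota 0 n.+1].

Definition partitions (n : nat) : seq (seq nat) :=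
  [seq l <- candidates n | is_partition n l].

Definition falling {F : fieldType} (k : nat) : {poly F} :=
  \prod_(i < k) ('X - (i%:R)%:P).

(* mult_j(l) = count_mem j l; parts of a partition of n are in [1,n] *)
Definition Pi_m {F : fieldType} (n : nat) (l : seq nat) : {poly F} :=
  ((\prod_(1 <= j < n.+1) ((count_mem j l)`!)%:R : F)^-1) *: falling (size l).

(* p_n(x) = Pi p_n(y), with
   p_n(y) = sum_{l |- n} n!/prod_i l_i! * (prod_i a_{l_i}) m_l(y),
   Pi being applied linearly to the monomials m_l. *)
Definition pPi {F : fieldType} (a : nat -> F) (n : nat) : {poly F} :=
  \sum_(l <- partitions n)
     ((n`!%:R / (\prod_(i <- l) (i`!)%:R) * \prod_(i <- l) a i) *: Pi_m n l).

Definition fps (R : Type) := nat -> R.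

Definition fps_mul {R : comRingType} (f g : fps R) : fps R :=
  fun n => \sum_(i < n.+1) f i * g (n - i)%N.

Definition fps_one {R : comRingType} : fps R := fun n => if n is 0%N then 1 else 0.

Definition fps_pow {R : comRingType} (f : fps R) (k : nat) : fps R :=
  iter k (fps_mul f) fps_one.

(* log G for G with G_0 = 1: sum_{k>=1} (-1)^(k+1) (G-1)^k / k.
   Since (G-1)^k has no terms of degree < k, coefficient n only involves k <= n. *)
Definition fps_log {F : fieldType} (G : fps {poly F}) : fps {poly F} :=
  fun n => \sum_(1 <= k < n.+1)
     (((-1) ^+ k.+1 / k%:R : F) *: fps_pow (fun m => G m - fps_one m) k n).

(* exp H for H with H_0 = 0: sum_{k>=0} H^k / k!.
   Since H^k has no terms of degree < k, coefficient n only involves k <= n. *)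
Definition fps_exp {F : fieldType} (H : fps {poly F}) : fps {poly F} :=
  fun n => \sum_(k < n.+1) ((k`!%:R : F)^-1 *: fps_pow H k n).

Definition Gen {F : fieldType} (a : nat -> F) : fps {poly F} :=
  fun i => (a i / i`!%:R)%:P.

Definition Gen_pow_x {F : fieldType} (a : nat -> F) : fps {poly F} :=
  fps_exp (fun m => 'X * fps_log (Gen a) m).

Definition quasi_species {F : fieldType} (a : nat -> F) : Prop :=
  a 0%N = 1 /\ a 1%N <> 0.

(* Main.v *)
Require Import Defs.
From mathcomp Require Import all_boot all_order all_algebra.
From mathcomp Require Import ring zify.
From mathcomp Require Import complex Rstruct.
Set Implicit Arguments. Unset Strict Implicit. Unset Printing Implicit Defensive.
Import Order.TTheory GRing.Theory Num.Theory.
Local Open Scope ring_scope.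

Section Val.
Variable R : comNzRingType.
Implicit Types p q : {poly R}.

Definition V (N : nat) p := forall i, (i < N)%N -> p`_i = 0.

Lemma V0 N : V N 0. Proof. by move=> i _; rewrite coef0. Qed.
Lemma VD N p q : V N p -> V N q -> V N (p + q).
Proof. by move=> hp hq i hi; rewrite coefD hp ?hq ?addr0. Qed.
Lemma VN N p : V N p -> V N (- p).
Proof. by move=> hp i hi; rewrite coefN hp ?oppr0. Qed.
Lemma VB N p q : V N p -> V N q -> V N (p - q).
Proof. by move=> hp hq; apply: VD => //; apply: VN. Qed.
Lemma Vmono N M p : (M <= N)%N -> V N p -> V M p.
Proof. by move=> hMN hp i hi; apply: hp; apply: leq_trans hMN. Qed.
Lemma Vmul a b p q : V a p -> V b q -> V (a + b) (p * q).
Proof.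
move=> hp hq i hi; rewrite coefM big1 // => j _.
have [hj|hj] := ltnP j a; first by rewrite hp ?mul0r.
rewrite hq ?mulr0 //; have := ltn_ord j; lia.
Qed.
Lemma Vmulr N p q : V N p -> V N (q * p).
Proof. by move=> hp; have h0 : V 0 q by []; have := Vmul h0 hp; rewrite add0n. Qed.
Lemma Vmull N p q : V N p -> V N (p * q).
Proof. by move=> hp; rewrite mulrC; apply: Vmulr. Qed.
Lemma VX p k : V 1 p -> V k (p ^+ k).
Proof.
move=> hp; elim: k => [|k IH]; first by move=> i.
by rewrite exprS; have := Vmul hp IH; rewrite add1n.
Qed.
Lemma Vsum N (I : Type) (r : seq I) (P : pred I) (F : I -> {poly R}) :
  (forall i, P i -> V N (F i)) -> V N (\sum_(i <- r | P i) F i).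
Proof.
move=> h; elim/big_rec: _ => [|i x Pi hx]; first exact: V0.
by apply: VD => //; apply: h.
Qed.
Lemma Vderiv N p : V N.+1 p -> V N p^`().
Proof. by move=> hp i hi; rewrite coef_deriv hp ?mul0rn. Qed.

End Val.

Lemma fps_powE (R : comNzRingType) (f : fps R) (P : {poly R}) N :
  (forall i, (i <= N)%N -> P`_i = f i) ->
  forall k n, (n <= N)%N -> fps_pow f k n = (P ^+ k)`_n.
Proof.
move=> hP; elim=> [|k IH] n hn.
  by rewrite expr0 coef1; case: n {hn}.
rewrite exprS coefM /fps_pow iterS /fps_mul -/(fps_pow f k).
apply: eq_bigr => j _; rewrite hP ?IH //; have := ltn_ord j; lia.
Qed.


Section ODE.
Variable F : fieldType.
Hypothesis hF : forall n, (n.+1%:R : F) != 0.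
Variable a : nat -> F.
Hypothesis ha0 : a 0%N = 1.
Variable N : nat.

Local Notation R := {poly F}.
Local Notation T := {poly {poly F}}.

Definition Up : T := \poly_(i < N.+1) (Gen a i - fps_one i).
Definition Lp : T := \sum_(1 <= k < N.+1) ((-1) ^+ k.+1 / k%:R : F)%:P *: Up ^+ k.
Definition Hp : T := ('X : R)%:P * Lp.
Definition Ep : T := \sum_(k < N.+1) ((k`!%:R : F)^-1)%:P *: Hp ^+ k.
Definition bl (l : nat) : R := ((l`!%:R : F)^-1) *: falling l.
Definition Bp : T := \sum_(l < N.+1) bl l *: Up ^+ l.
Definition ode (p : T) : T := (1 + Up) * p^`() - (('X : R)%:P * Up^`()) * p.

Lemma natr_neq0R n : (n.+1%:R : R) != 0.
Proof. by rewrite -polyC_natr polyC_eq0. Qed.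

Lemma Up_coef i : (i <= N)%N -> Up`_i = Gen a i - fps_one i.
Proof. by move=> hi; rewrite coef_poly ltnS hi. Qed.

Lemma V1Up : V 1 Up.
Proof.
case=> // _; rewrite Up_coef // /Gen /= ha0 fact0 divr1 subrr //.
Qed.

Lemma odeB p q : ode (p - q) = ode p - ode q.
Proof. rewrite /ode derivB; ring. Qed.

Lemma ode_unique (D : T) : V N (ode D) -> D`_0 = 0 ->
  forall i, (i <= N)%N -> D`_i = 0.
Proof.
move=> hode h0.
suff H : forall i, (i <= N)%N -> V i.+1 D.
  by move=> i hi; apply: (H i hi).
elim=> [|i IH] hi; first by case.
have hV := IH (ltnW hi).
move=> j; rewrite ltnS leq_eqVlt => /orP[/eqP->|]; last by apply: hV.
have h1 : (ode D)`_i = 0 by apply: hode.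
have h2 : (Up * D^`())`_i = 0.
  by have := Vmul V1Up (Vderiv hV); rewrite add1n; apply.
have h3 : ((('X : R)%:P * Up^`()) * D)`_i = 0 by apply: Vmulr hV _ _.
move: h1; rewrite /ode coefB mulrDl mul1r coefD h2 h3 addr0 subr0.
rewrite coef_deriv -mulr_natr => /eqP; rewrite mulf_eq0 (negbTE (natr_neq0R _)) orbF.
by move/eqP.
Qed.


Lemma fact_neq0 n : (n`!%:R : F) != 0.
Proof. by rewrite -(prednK (fact_gt0 n)) hF. Qed.

Lemma bl_rec i : bl i.+1 *+ i.+1 + bl i *+ i = ('X : R) * bl i.
Proof.
rewrite /bl /falling big_ord_recr /= -/(falling i).
set u := ((i`!%:R : F)^-1).
have e : (((i.+1)`!%:R : F)^-1) *+ i.+1 = u.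
  rewrite /u factS natrM -mulr_natr; field.
  by rewrite fact_neq0 -mulrS hF.

rewrite scalerMnl e -!mul_polyC polyC_natr; ring.
Qed.

Lemma deriv_sumZ (I : Type) (r : seq I) (c : I -> R) (f : I -> T) :
  (\sum_(i <- r) c i *: f i)^`() = \sum_(i <- r) c i *: (f i)^`().
Proof.
rewrite linear_sum; apply: eq_bigr => i _; exact: derivZ.
Qed.

Lemma V_odeB : V N (ode Bp).
Proof.
set S := \sum_(l < N.+1) (bl l *+ l) *: Up ^+ l.-1.
have dB : Bp^`() = Up^`() * S.
  rewrite /Bp deriv_sumZ /S mulr_sumr; apply: eq_bigr => l _.
  by rewrite deriv_exp -!mul_polyC polyCMn; ring.
have hS : (1 + Up) * S - ('X : R)%:P * Bp =
    ((bl N *+ N) - ('X : R) * bl N) *: Up ^+ N.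
  have S1 : S = \sum_(i < N) (bl i.+1 *+ i.+1) *: Up ^+ i.
    by rewrite /S big_ord_recl /= mulr0n scale0r add0r.
  have S2 : Up * S = \sum_(i < N) (bl i *+ i) *: Up ^+ i + (bl N *+ N) *: Up ^+ N.
    have -> : Up * S = \sum_(l < N.+1) (bl l *+ l) *: Up ^+ l.
      rewrite big_ord_recl /= mulr0n scale0r add0r S1 mulr_sumr.
      by apply: eq_bigr => i _; rewrite -scalerAr -exprS.
    by rewrite big_ord_recr.
  have B1 : ('X : R)%:P * Bp = \sum_(i < N) (('X : R) * bl i) *: Up ^+ i
       + (('X : R) * bl N) *: Up ^+ N.
    rewrite /Bp mulr_sumr big_ord_recr /=; congr (_ + _).
      by apply: eq_bigr => i _; rewrite mul_polyC scalerA.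
    by rewrite mul_polyC scalerA.
  rewrite mulrDl mul1r S2 B1 S1 scalerBl.
  have -> : \sum_(i < N) (bl i.+1 *+ i.+1) *: Up ^+ i =
     \sum_(i < N) (('X : R) * bl i) *: Up ^+ i - \sum_(i < N) (bl i *+ i) *: Up ^+ i.
    rewrite -sumrB; apply: eq_bigr => i _; rewrite -bl_rec -scalerBl; congr (_ *: _).
    by rewrite addrK.
  ring.
have -> : ode Bp = Up^`() * ((1 + Up) * S - ('X : R)%:P * Bp).
  rewrite /ode dB; ring.
apply: Vmulr; rewrite hS => i hi; rewrite coefZ (VX V1Up) ?mulr0 //.
Qed.


Lemma Lp_alt : Lp = \sum_(k < N) ((-1) ^+ k.+2 / k.+1%:R : F)%:P *: Up ^+ k.+1.
Proof. by rewrite /Lp big_add1 /= big_mkord. Qed.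

Lemma V1Lp : V 1 Lp.
Proof.
rewrite Lp_alt; apply: Vsum => k _ i hi; rewrite coefZ.
by rewrite (@Vmono _ k.+1 1 _ (ltn0Sn k) (VX (k:=k.+1) V1Up)) ?mulr0.
Qed.

Lemma V1Hp : V 1 Hp.
Proof. exact: Vmulr V1Lp. Qed.

Lemma dLp : (1 + Up) * Lp^`() = Up^`() * (1 - (- Up) ^+ N).
Proof.
have -> : Lp^`() = Up^`() * \sum_(k < N) (- Up) ^+ k.
  rewrite Lp_alt deriv_sumZ mulr_sumr; apply: eq_bigr => k _.
  rewrite deriv_exp /= -!mul_polyC [(- Up) ^+ k]exprNn.
  have e : ((-1) ^+ k.+2 / k.+1%:R : F) *+ k.+1 = (-1) ^+ k.
    rewrite -mulr_natr !exprS; field; by rewrite -?mulrS hF.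
  have e' : ((((-1) ^+ k : F)%:P)%:P : T) = (-1) ^+ k by rewrite !rmorphXn !rmorphN1.
  rewrite -e' -e !polyCMn; ring.
have := subrX1 (- Up) N => e.
have -> : 1 - (- Up) ^+ N = - ((- Up) ^+ N - 1) by ring.
rewrite e; ring.
Qed.

Lemma V_odeE : V N (ode Ep).
Proof.
set eN : T := (((N`!%:R : F)^-1)%:P)%:P.
have dE : Ep^`() = Hp^`() * (Ep - eN * Hp ^+ N).
  rewrite {1}/Ep deriv_sumZ big_ord_recl /= deriv_exp mulr0n scaler0 add0r.
  rewrite /Ep big_ord_recr /= /eN mul_polyC addrK mulr_sumr.
  apply: eq_bigr => k _; rewrite deriv_exp /= -!mul_polyC.
  have e : ((k.+1`!%:R : F)^-1) *+ k.+1 = (k`!%:R)^-1.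
    rewrite factS natrM -mulr_natr; field.
    by rewrite fact_neq0 -mulrS hF.
  rewrite /bump /= add1n add0n -e !polyCMn; ring.
have dH : (1 + Up) * Hp^`() = ('X : R)%:P * Up^`() * (1 - (- Up) ^+ N).
  rewrite /Hp deriv_mulC -mulrA; rewrite mulrCA dLp; ring.
have -> : ode Ep = ('X : R)%:P * Up^`() *
    (- ((- Up) ^+ N * (Ep - eN * Hp ^+ N)) - eN * Hp ^+ N).
  rewrite /ode dE mulrA dH; ring.
apply: Vmulr; apply: VB; last by apply: Vmulr; apply: VX V1Hp.
by apply: VN; apply: Vmull; apply: VX; apply: VN V1Up.
Qed.


Lemma Ep0 : Ep`_0 = 1.
Proof.
rewrite /Ep coef_sum big_ord_recl /= coefZ expr0 coef1 /= fact0 invr1 mulr1.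
rewrite big1 ?addr0 // => k _; rewrite coefZ.
by rewrite (VX (k := (bump 0 k)) V1Hp) ?mulr0.
Qed.

Lemma Bp0 : Bp`_0 = 1.
Proof.
rewrite /Bp coef_sum big_ord_recl /= coefZ expr0 coef1 /= /bl fact0 invr1.
rewrite /falling big_ord0 scale1r mulr1.
rewrite big1 ?addr0 // => k _; rewrite coefZ.
by rewrite (VX (k := (bump 0 k)) V1Up) ?mulr0.
Qed.

Lemma EpBp : Ep`_N = Bp`_N.
Proof.
apply/eqP; rewrite -subr_eq0 -coefB; apply/eqP.
apply: ode_unique => //; last by rewrite coefB Ep0 Bp0 subrr.
by rewrite odeB; apply: VB; [apply: V_odeE | apply: V_odeB].
Qed.

Lemma Lp_coef m : (m <= N)%N -> Lp`_m = fps_log (Gen a) m.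
Proof.
move=> hm; rewrite /Lp /fps_log coef_sum (@big_cat_nat _ _ _ m.+1) ?ltnS //=.
rewrite [X in _ + X]big1_seq ?addr0; last first.
  move=> k /andP[_]; rewrite mem_index_iota => /andP[hk _].
  by rewrite coefZ (VX (k := k) V1Up) ?mulr0.
apply: eq_bigr => k _; rewrite coefZ mul_polyC; congr (_ *: _).
by rewrite (@fps_powE _ _ Up N) // => i hi; rewrite Up_coef.
Qed.

Lemma Gen_pow_Ep : Gen_pow_x a N = Ep`_N.
Proof.
rewrite /Gen_pow_x /fps_exp /Ep coef_sum; apply: eq_bigr => k _.
rewrite coefZ mul_polyC; congr (_ *: _).
by rewrite (@fps_powE _ _ Hp N) // => i hi; rewrite /Hp coefCM Lp_coef.
Qed.

End ODE.


Fixpoint comps (l n : nat) : seq (seq nat) :=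
  match l with
  | 0 => if n == 0%N then [:: [::]] else [::]
  | l'.+1 => [seq j :: s | j <- iota 0 n.+1, s <- comps l' (n - j)]
  end.

Lemma compsS l n : comps l.+1 n = [seq j :: s | j <- iota 0 n.+1, s <- comps l (n - j)].
Proof. by []. Qed.

Lemma coef_pow_comps (R : comNzRingType) (p : {poly R}) l n :
  (p ^+ l)`_n = \sum_(s <- comps l n) \prod_(i <- s) p`_i.
Proof.
elim: l n => [|l IH] n.
  by rewrite expr0 coef1; case: n => [|n] /=; rewrite ?big_seq1 ?big_nil.
rewrite exprS coefM compsS big_allpairs_dep.
rewrite -(big_mkord xpredT (fun j => p`_j * (p ^+ l)`_(n - j))) /index_iota subn0.
apply: eq_bigr => j _; rewrite IH mulr_sumr; apply: eq_bigr => s _.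
by rewrite big_cons.
Qed.

Lemma mem_comps l n s : (s \in comps l n) = (size s == l) && (sumn s == n).
Proof.
elim: l n s => [|l IH] n s.
  by case: n => [|n]; case: s => [|x s] //=; rewrite ?inE.
rewrite compsS; apply/allpairsPdep/idP => [[j [s' [hj hs' ->]]]|].
  rewrite IH in hs'; case/andP: hs' => /eqP h1 /eqP h2.
  move: hj; rewrite mem_iota add0n => /andP[_ hj]; apply/andP; split; apply/eqP => /=; first by rewrite h1.
  by rewrite h2 subnKC // -ltnS.
case: s => [|j s'] // /andP[hs hsum]; move: hs hsum => /= hs hsum.
move/eqP: hsum => hsum.
exists j, s'; split => //.
  by change (j \in iota 0 n.+1); rewrite mem_iota add0n ltnS -hsum leq_addr.
by rewrite IH -hsum addKn eqxx andbT.
Qed.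

Lemma comps_uniq l n : uniq (comps l n).
Proof.
elim: l n => [|l IH] n; first by case: n.
rewrite compsS; apply: allpairs_uniq_dep => //; first exact: iota_uniq.
by case=> [_ _] [x t] _ _ [-> ->].
Qed.

Lemma mem_candidates n s : (size s <= n)%N -> all (fun i => i <= n)%N s ->
  s \in candidates n.
Proof.
move=> hsz hall; apply/flattenP.
exists [seq map (@nat_of_ord n.+1) (tval t) | t : (size s).-tuple 'I_n.+1].
  by apply/mapP; exists (size s) => //; rewrite mem_iota add0n ltnS.
have hsz' : size (map (@inord n) s) == size s by rewrite size_map.
apply/mapP; exists (Tuple hsz'); first by rewrite mem_enum.
rewrite /= -map_comp map_id_in // => i hi /=; rewrite inordK // ltnS.
by move/allP: hall; apply.
Qed.

Lemma uniq_flatten_key (T : eqType) (s : seq nat) (f : nat -> seq (seq T)) :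
  uniq s -> (forall k, uniq (f k)) -> (forall k x, x \in f k -> size x = k) ->
  uniq (flatten (map f s)).
Proof.
move=> us uf kf; elim: s us => //= k s IH /andP[ks us].
rewrite cat_uniq uf IH // andbT /=; apply/hasPn => x /flattenP[y /mapP[k' hk' ->] hx].
apply/negP => hxk; move: ks; rewrite -(kf _ _ hxk) (kf _ _ hx) hk'.
by [].
Qed.

Lemma candidates_uniq n : uniq (candidates n).
Proof.
apply: uniq_flatten_key; first exact: iota_uniq.
  move=> k; rewrite map_inj_uniq ?enum_uniq // => t1 t2 h.
  by apply: val_inj; apply: (inj_map val_inj).
by move=> k x /mapP[t _ ->]; rewrite size_map size_tuple.
Qed.

Lemma size_le_sumn s : all (fun i => 0 < i)%N s -> (size s <= sumn s)%N.
Proof.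
elim: s => //= x s IH /andP[hx hs]; have := IH hs; lia.
Qed.

Lemma elem_le_sumn s i : i \in s -> (i <= sumn s)%N.
Proof.
elim: s => //= x s IH; rewrite inE => /orP[/eqP ->|/IH]; lia.
Qed.

Lemma mem_partitions n t : (t \in partitions n) = is_partition n t.
Proof.
rewrite mem_filter; apply: andb_idr => /and3P[_ hpos /eqP hsum].
apply: mem_candidates; first by rewrite -hsum size_le_sumn.
by apply/allP => i hi; rewrite -hsum elem_le_sumn.
Qed.

Lemma partitions_uniq n : uniq (partitions n).
Proof. exact: filter_uniq (candidates_uniq n). Qed.

Lemma sum_count_undup (t : seq nat) :
  (\sum_(x <- undup t) count_mem x t)%N = size t.
Proof.
rewrite -(perm_size (perm_count_undup t)) size_flatten /shape -map_comp sumnE big_map.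
by apply: eq_bigr => x _; rewrite /= size_nseq.
Qed.

Lemma prod_count_rem (t D : seq nat) x : uniq D -> x \in D -> x \in t ->
  (\prod_(j <- D) (count_mem j t)`!)%N =
  (count_mem x t * \prod_(j <- D) (count_mem j (rem x t))`!)%N.
Proof.
move=> uD xD xt.
rewrite (bigD1_seq x) //= [X in (_ = _ * X)%N](bigD1_seq x) //=.
have hc : (0 < count_mem x t)%N by rewrite -has_count has_pred1.
rewrite count_rem xt /= eqxx -(prednK hc) factS subn1 /= mulnA; congr (_ * _)%N.
apply: eq_bigr => j hj; rewrite count_rem xt /=.
by rewrite eq_sym (negbTE hj) subn0.
Qed.

Lemma perms_count (t D : seq nat) : uniq D -> {subset t <= D} ->
  (size (permutations t) * \prod_(j <- D) (count_mem j t)`!)%N = (size t)`!.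
Proof.
move=> uD; move Dn: (size t) => n; elim: n t Dn => [|n IH] t Dn tD.
  case: t Dn tD => // _ _; rewrite big1 // => j _.
have ht : (0 < size t)%N by rewrite Dn.
rewrite (perm_size (permutationsE ht)) size_allpairs_dep sumnE big_map big_distrl /=.
rewrite (eq_big_seq (fun x => count_mem x t * n`!)%N).
  by rewrite -big_distrl /= sum_count_undup Dn factS mulnC.
move=> x; rewrite mem_undup => xt.
rewrite (prod_count_rem uD (tD x xt) xt) mulnCA IH //.
  by rewrite size_rem // Dn.
by move=> y /mem_rem; apply: tD.
Qed.

Section SumParts.
Variable R : comNzRingType.

Lemma sum_const_count (T : eqType) (r : seq T) (P : pred T) (c : R) :
  \sum_(x <- r | P x) c = c *+ count P r.
Proof.
elim: r => [|x r IH]; first by rewrite big_nil.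
by rewrite big_cons IH /=; case: (P x); rewrite ?mulrS ?add0n.
Qed.

Definition pos (s : seq nat) := all (fun i => 0 < i)%N s.

Lemma geq_tr : transitive geq.
Proof. by move=> y x z h1 h2; apply: leq_trans h2 h1. Qed.
Lemma geq_as : antisymmetric geq.
Proof. by move=> x y h; apply: anti_leq; rewrite andbC. Qed.
Lemma geq_tot : total geq.
Proof. by move=> x y; apply: leq_total. Qed.

Lemma sort_part n s : pos s -> sumn s = n -> sort geq s \in partitions n.
Proof.
rewrite /pos => hp hs; rewrite mem_partitions /is_partition sort_sorted; last exact: geq_tot.
rewrite (perm_all _ (permEl (perm_sort geq s))) hp /=.
by rewrite (perm_sumn (permEl (perm_sort geq s))) hs.
Qed.

Lemma count_parts l n s : s \in comps l n -> pos s ->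
  count (fun t => (size t == l) && perm_eq s t) (partitions n) = 1%N.
Proof.
rewrite mem_comps => /andP[/eqP hsz /eqP hsum] hp.
rewrite (@eq_in_count _ _ (pred1 (sort geq s))).
  by rewrite count_uniq_mem ?partitions_uniq // sort_part.
move=> t; rewrite mem_partitions => /and3P[ts _ _] /=.
apply/idP/eqP => [/andP[_ hst]|->].
  apply: (sorted_eq geq_tr geq_as) => //; first exact: sort_sorted geq_tot _.
  by rewrite perm_sym perm_sort.
by rewrite size_sort hsz eqxx perm_sym perm_sort perm_refl.
Qed.

Lemma count_perms l n t : t \in partitions n -> size t = l ->
  count (fun s => pos s && perm_eq s t) (comps l n) = size (permutations t).
Proof.
rewrite mem_partitions => /and3P[_ tp /eqP tsum] tsz.
rewrite -size_filter; apply: perm_size; apply: uniq_perm.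
- by apply: filter_uniq; apply: comps_uniq.
- exact: permutations_uniq.
move=> s; rewrite mem_filter mem_permutations mem_comps.
apply/idP/idP => [/andP[/andP[_ ->] _] //| hst].
rewrite hst /pos (perm_all _ hst) tp (perm_size hst) tsz (perm_sumn hst) tsum.
by rewrite !eqxx.
Qed.

Lemma sum_comps_parts (w : seq nat -> R) l n :
  (forall s t, perm_eq s t -> w s = w t) ->
  \sum_(s <- comps l n | pos s) w s =
  \sum_(t <- partitions n | size t == l) w t *+ size (permutations t).
Proof.
move=> hw.
have -> : \sum_(t <- partitions n | size t == l) w t *+ size (permutations t) =
   \sum_(t <- partitions n) \sum_(s <- comps l n)
      (if (size t == l) && (pos s && perm_eq s t) then w s else 0).
  rewrite big_mkcond /=; apply: eq_big_seq => t ht.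
  case: eqP => [hl|_]; last by rewrite big1.
  rewrite -big_mkcond /= (eq_bigr (fun _ => w t)); last first.
    by move=> s /andP[_ /hw].
  by rewrite sum_const_count count_perms.
rewrite exchange_big /= big_mkcond /=; apply: eq_big_seq => s hs.
case hp: (pos s); last by rewrite big1 // => t _; rewrite andbF.
rewrite -big_mkcond /= sum_const_count.
by rewrite (eq_count (a2 := fun t => (size t == l) && perm_eq s t)) ?count_parts.
Qed.

End SumParts.


Section Comb.
Variable F : fieldType.
Hypothesis hF : forall n, (n.+1%:R : F) != 0.
Variable a : nat -> F.
Hypothesis ha0 : a 0%N = 1.
Variable N : nat.

Local Notation R := {poly F}.

Lemma natr_pos_neq0 n : (0 < n)%N -> (n%:R : F) != 0.
Proof. by move=> hn; rewrite -(prednK hn) hF. Qed.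

Lemma key_alg (Nf Pf Pa M : F) (sp : nat) : Nf != 0 -> Pf != 0 -> (sp%:R : F) != 0 -> M != 0 ->
  Nf^-1 * (Nf / Pf * Pa) * M^-1 = ((sp%:R : F) * M)^-1 * (Pa / Pf) *+ sp.
Proof. move=> h1 h2 h3 h4; rewrite -mulr_natr; field; by rewrite ?h1 ?h2 ?h3 ?h4. Qed.

Definition w (s : seq nat) : R := (\prod_(i <- s) (a i / i`!%:R))%:P.

Lemma w_perm s t : perm_eq s t -> w s = w t.
Proof. by move=> h; rewrite /w (perm_big _ h). Qed.

Lemma coef_Up_pow l : ((Up a N) ^+ l)`_N = \sum_(s <- comps l N | pos s) w s.
Proof.
rewrite coef_pow_comps [RHS]big_mkcond /=; apply: eq_big_seq => s hs.
have hle : forall i, i \in s -> (i <= N)%N.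
  by move: hs; rewrite mem_comps => /andP[_ /eqP <-] i; apply: elem_le_sumn.
case: ifP => hp.
  rewrite /w rmorph_prod /=; apply: eq_big_seq => i hi.
  rewrite Up_coef ?hle // /Gen.
  have : (0 < i)%N by move/allP: hp; apply.
  by case: i {hi} => // i _; rewrite /fps_one subr0.
have : 0%N \in s.
  apply: contraFT hp => h0; apply/allP => i hi; rewrite lt0n.
  by apply: contraNneq h0 => <-.
move=> h0; rewrite (big_rem _ h0) /= (V1Up ha0 N) ?mul0r //.
Qed.


Lemma pPi_Bp : (N`!%:R : F)^-1 *: pPi a N = (Bp a N)`_N.
Proof.
rewrite /Bp coef_sum.
under eq_bigr => l _ do rewrite coefZ coef_Up_pow (sum_comps_parts _ _ w_perm) mulr_sumr.
have hsz : forall t, t \in partitions N -> (size t < N.+1)%N.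
  move=> t; rewrite mem_partitions => /and3P[_ tp /eqP <-].
  by rewrite ltnS size_le_sumn.
have -> : \sum_(l < N.+1) \sum_(t <- partitions N | size t == l)
            bl F l * (w t *+ size (permutations t)) =
          \sum_(t <- partitions N) bl F (size t) * (w t *+ size (permutations t)).
  rewrite (eq_bigr (fun l : 'I_N.+1 => \sum_(t <- partitions N)
     (if size t == l then bl F (size t) * (w t *+ size (permutations t)) else 0))).
    rewrite exchange_big /=; apply: eq_big_seq => t ht.
    rewrite (bigD1 (Ordinal (hsz t ht))) //= eqxx big1 ?addr0 // => j hj.
    rewrite ifN //; apply: contra hj => /eqP h; apply/eqP/val_inj => /=.
    by rewrite h.
  move=> l _; rewrite big_mkcond /=; apply: eq_bigr => t _.
  by case: eqP => // ->.
rewrite /pPi scaler_sumr; apply: eq_big_seq => t ht.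
move: (ht); rewrite mem_partitions => /and3P[_ tp /eqP tsum].
have hsub : {subset t <= index_iota 1 N.+1}.
  move=> i hi; rewrite mem_index_iota ltnS -tsum elem_le_sumn // andbT.
  by move/allP: tp; apply.
have hcnt := perms_count (iota_uniq 1 (N.+1 - 1)) hsub.
move: hcnt; set sp := size (permutations t).
set M := (\prod_(j <- index_iota 1 N.+1) (count_mem j t)`!)%N => hcnt.
have hsp : (0 < sp)%N by move: (fact_gt0 (size t)); rewrite -hcnt muln_gt0 => /andP[].
have hM : (0 < M)%N by move: (fact_gt0 (size t)); rewrite -hcnt muln_gt0 => /andP[].
have hPf : (0 < \prod_(i <- t) i`!)%N by rewrite prodn_gt0 // => i; apply: fact_gt0.
rewrite /Pi_m /bl /w -!natr_prod -/M.
have key : (N`!%:R)^-1 * (N`!%:R / (\prod_(i <- t) i`!)%N%:R * \prod_(i <- t) a i) * (M%:R)^-1 =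
    ((size t)`!%:R)^-1 * \prod_(i <- t) (a i / i`!%:R) *+ sp.
  have e1 : \prod_(i <- t) (a i / i`!%:R) = (\prod_(i <- t) a i) / ((\prod_(i <- t) i`!)%N)%:R.
    by rewrite big_split /= prodfV natr_prod.
  have e2 : ((size t)`!%:R : F) = sp%:R * M%:R by rewrite -natrM hcnt.
  rewrite e1 e2; apply: key_alg; apply: natr_pos_neq0 => //; exact: fact_gt0.
rewrite -!mul_polyC.
transitivity (((N`!%:R)^-1 * (N`!%:R / (\prod_(i <- t) i`!)%N%:R * \prod_(i <- t) a i) * (M%:R)^-1)%:P * falling (size t)).
  rewrite !polyCM; ring.
rewrite key polyCMn polyCM; ring.
Qed.

End Comb.

Lemma main_gen (F : fieldType) (hF : forall n, (n.+1%:R : F) != 0) (a : nat -> F) :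
  a 0%N = 1 -> forall n, ((n`!%:R : F)^-1 *: pPi a n) = Gen_pow_x a n.
Proof.
move=> ha0 n; rewrite pPi_Bp // (Gen_pow_Ep ha0) EpBp //.
Qed.


Lemma CC_char0 n : (n.+1%:R : CC) != 0.
Proof.
have := @pnatr_eq0 (complex.complex Rdefinitions.R) n.+1.
by move=> h; apply/negP => /eqP h'; move: h; rewrite /= h' eqxx.
Qed.

Theorem mainTheorem4 (a : nat -> CC) :
  quasi_species a ->
  forall n : nat,
    ((n`!%:R : CC)^-1 *: pPi a n) = Gen_pow_x a n.
Proof.
by move=> [ha0 _] n; apply: main_gen => //; exact: CC_char0.
Qed.
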